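(* For every $n\ge0$, the simplicial set $\mathfrak{C}^{\square}(\square^n)(\alpha,\omega)$ is (weakly) contractible, where $\alpha=\emptyset$ and $\omega=\{1,\dots,n\}$.
   Context: Cubical sets: presheaves on the category $\square$ with objects $[1]^n$ and morphisms generated by faces $\partial_{i,\epsilon}$ (insert $\epsilon$ at coordinate $i$), degeneracies (delete a coordinate) and negative connections ($\gamma_{i,0}$ replaces $(x_i,x_{i+1})$ by $\max(x_i,x_{i+1})$); $\square^n$ is representable; its vertices are subsets of $\{1,\dots,n\}$. Rigidification: $I_m$ is $m$ copies of $\square^1$ glued end to start (with distinguished endpoints); $\mathbb{I}_{k,m}$ is $I_k,\square^2,I_{m-2-k}$ glued end to start through $\emptyset,\{1,2\}$ of $\square^2$; $s_{k,m},t_{k,m}:I_m\to\mathbb{I}_{k,m}$ are the identity on the other edges and send edges $k+1,k+2$ to $\emptyset\to\{2\}\to\{1,2\}$, resp. $\emptyset\to\{1\}\to\{1,2\}$. For a cubical set $S$ with vertices $a,b$, $\mathfrak{C}^{\square}_{path}(S)(a,b)$ is the set of maps $I_m\to S$ sending endpoints to $a,b$, modulo the equivalence generated by $\gamma\sim\gamma'\circ h$ ($h$ endpoint-preserving), preordered by the reflexive-transitive closure of $[F\circ s_{k,m}]\leadsto[F\circ t_{k,m}]$; concatenation gives a preorder-enriched category. $\mathfrak{C}^{\square}$ is the left Kan extension along Yoneda of $[1]^n\mapsto N(\mathfrak{C}^{\square}_{path}(\square^n))$ (nerve homwise). *)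

(* Defs.v *)
From Stdlib Require Import Relation_Operators ProofIrrelevance FunctionalExtensionality.
From mathcomp Require Import all_boot.

Set Implicit Arguments.
Unset Strict Implicit.
Unset Printing Implicit Defensive.

Definition mono (k l : nat) :=
  {f : 'I_k.+1 -> 'I_l.+1 | forall i j : 'I_k.+1, i <= j -> f i <= f j}.

Definition idm (k : nat) : mono k k.
Proof. by exists (fun i => i). Defined.

Definition compm k l m (g : mono l m) (f : mono k l) : mono k m.
Proof.
exists (fun i => proj1_sig g (proj1_sig f i)).
by move=> i j h; apply: (proj2_sig g); apply: (proj2_sig f).
Defined.

Record sSet := SSet {
  sx :> nat -> Type;
  sact : forall k l, mono k l -> sx l -> sx k;
  sact_id : forall k (x : sx k), sact (idm k) x = x;
  sact_comp : forall k l m (g : mono l m) (f : mono k l) (x : sx m),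
      sact (compm g f) x = sact f (sact g x);
  sact_ext : forall k l (f g : mono k l),
      (forall i, proj1_sig f i = proj1_sig g i) -> forall x, sact f x = sact g x
}.

Arguments sact s {k l} _ _.

Definition smap (X Y : sSet) :=
  {F : forall k, X k -> Y k |
     forall k l (f : mono k l) (x : X l), F k (sact X f x) = sact Y f (F l x)}.

Definition Delta0 : sSet.
Proof.
refine (@SSet (fun _ => unit) (fun _ _ _ _ => tt) _ _ _).
- by move=> k [].
- by [].
- by [].
Defined.

Definition to0 (k : nat) : mono k 0.
Proof. by exists (fun _ => ord0). Defined.

Definition const_map (X K : sSet) (v : K 0) : smap X K.
Proof.
exists (fun k _ => sact K (to0 k) v).
move=> k l f x; rewrite -sact_comp; apply: sact_ext => i /=.
by [].
Defined.

Arguments const_map X K v : clear implicits.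

Definition cst0 (k : nat) : mono k 1.
Proof. by exists (fun _ => ord0). Defined.
Definition cst1 (k : nat) : mono k 1.
Proof. by exists (fun _ => ord_max). Defined.

(* An (elementary) homotopy F ~ G : X -> K, i.e. a map H : X x Delta^1 -> K
   (a k-simplex of Delta^1 is a monotone map [k] -> [1]) restricting to F
   on the vertex 0 and to G on the vertex 1. *)
Definition htpy (X K : sSet) (F G : smap X K) : Prop :=
  exists H : forall k, X k -> mono k 1 -> K k,
    (forall k l (f : mono k l) (x : X l) (u : mono l 1),
        H k (sact X f x) (compm u f) = sact K f (H l x u)) /\
    (forall k (x : X k), H k x (cst0 k) = proj1_sig F k x) /\
    (forall k (x : X k), H k x (cst1 k) = proj1_sig G k x).

Definition homotopic (X K : sSet) : smap X K -> smap X K -> Prop :=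
  clos_refl_sym_trans (smap X K) (@htpy X K).

Lemma lift_homo (p : nat) (i : 'I_p.+2) :
  forall a b : 'I_p.+1, a <= b -> lift i a <= lift i b.
Proof.
move=> a b h; rewrite /= /bump.
case: (leqP i a) => ha; case: (leqP i b) => hb /=.
- by rewrite !add1n ltnS.
- by move: (leq_ltn_trans (leq_trans ha h) hb); rewrite ltnn.
- by rewrite add0n add1n; apply: leqW.
- by rewrite !add0n.
Qed.

Definition delta (p : nat) (i : 'I_p.+2) : mono p p.+1.
Proof. exists (lift i); exact: lift_homo. Defined.

(* A map Lambda^{p+1}_k -> K is a family of p-simplices y_i (i <> k), one for
   each face, agreeing on the pairwise intersections of the faces. *)
Definition Kan (K : sSet) : Prop :=
  forall (p : nat) (k : 'I_p.+2) (y : 'I_p.+2 -> K p),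
    (forall i j : 'I_p.+2, i != k -> j != k ->
       forall m (f g : mono m p),
         (forall t, lift i (proj1_sig f t) = lift j (proj1_sig g t)) ->
         sact K f (y i) = sact K g (y j)) ->
    exists z : K p.+1, forall i : 'I_p.+2, i != k -> sact K (delta i) z = y i.

(* X is weakly contractible: X -> Delta^0 is a weak homotopy equivalence,
   i.e. for every Kan complex K the induced map
   [Delta^0, K] -> [X, K] on homotopy classes is a bijection
   (first conjunct: surjective; second conjunct: injective). *)
Definition weakly_contractible (X : sSet) : Prop :=
  forall K : sSet, Kan K ->
    (forall F : smap X K, exists v : K 0, homotopic F (const_map X K v)) /\
    (forall v w : K 0,
        homotopic (const_map X K v) (const_map X K w) ->
        homotopic (const_map Delta0 K v) (const_map Delta0 K w)).

Lemma sig_eq_irr (A : Type) (P : A -> Prop) (x y : sig P) :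
  proj1_sig x = proj1_sig y -> x = y.
Proof.
case: x => a ha; case: y => b hb /= e; subst b.
by rewrite (proof_irrelevance _ ha hb).
Qed.

Definition nerve_sx (P : Type) (le : P -> P -> Prop) (k : nat) :=
  {x : 'I_k.+1 -> P | forall i j : 'I_k.+1, i <= j -> le (x i) (x j)}.

Definition nerve_act (P : Type) (le : P -> P -> Prop) k l (f : mono k l)
  (x : nerve_sx le l) : nerve_sx le k.
Proof.
exists (fun i => proj1_sig x (proj1_sig f i)).
by move=> i j h; apply: (proj2_sig x); apply: (proj2_sig f).
Defined.

Definition nerve (P : Type) (le : P -> P -> Prop) : sSet.
Proof.
refine (@SSet (nerve_sx le) (@nerve_act P le) _ _ _).
- by move=> k x; apply: sig_eq_irr.
- by move=> k l m g f x; apply: sig_eq_irr.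
- move=> k l f g e x; apply: sig_eq_irr => /=.
  by apply: functional_extensionality => i; rewrite e.
Defined.

(* [1]^n, coordinates indexed 0 .. n-1 (the paper's 1 .. n); a vertex
   (subset of {1..n}) is a point of [1]^n, i.e. its indicator function. *)
Definition cube (n : nat) := 'I_n -> bool.

Definition face (n : nat) (i : 'I_n.+1) (e : bool) (x : cube n) : cube n.+1 :=
  fun j => match unlift i j with Some j' => x j' | None => e end.

Definition degen (n : nat) (i : 'I_n.+1) (x : cube n.+1) : cube n :=
  fun j => x (lift i j).

Definition conn (n : nat) (i : 'I_n.+1) (x : cube n.+2) : cube n.+1 :=
  fun j => if (j < i)%N then x (inord j)
           else if j == i :> nat then x (inord j) || x (inord j.+1)
           else x (inord j.+1).

(* Morphisms of the cube category: the maps generated (under composition)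
   by faces, degeneracies and negative connections (maps are functions, so
   they are considered up to extensional equality). *)
Inductive cmap : forall m n : nat, (cube m -> cube n) -> Prop :=
| cmap_id n : @cmap n n (fun x => x)
| cmap_face n i e : @cmap n n.+1 (face i e)
| cmap_degen n i : @cmap n.+1 n (degen i)
| cmap_conn n i : @cmap n.+2 n.+1 (conn i)
| cmap_comp l m n (f : cube l -> cube m) (g : cube m -> cube n) :
    cmap f -> cmap g -> cmap (fun x => g (f x))
| cmap_ext m n (f g : cube m -> cube n) :
    cmap f -> (forall x j, f x j = g x j) -> cmap g.

Definition eqpt (n : nat) (u v : cube n) : Prop := forall i, u i = v i.

Definition c0 : cube 1 := fun _ => false.
Definition c1 : cube 1 := fun _ => true.
Definition ff2 : cube 2 := fun _ => false.
Definition tt2 : cube 2 := fun _ => true.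

(* A 1-cube of box^n is a cube map [1]^1 -> [1]^n.  A map I_m -> box^n
   (I_m = m copies of box^1 glued end to start) is a list of m 1-cubes,
   each starting where the previous one ends; with distinguished endpoints
   sent to a and b. *)
Definition edge (n : nat) := cube 1 -> cube n.

Fixpoint is_path (n : nat) (a b : cube n) (l : seq (edge n)) : Prop :=
  match l with
  | [::] => eqpt a b
  | e :: l' => cmap e /\ eqpt (e c0) a /\ is_path (e c1) b l'
  end.

(* 1-cubes of I_k : the k nondegenerate edges (IE j : j -> j+1, j < k) and
   the degenerate 1-cubes at the vertices (ID v, v <= k). *)
Inductive icell := IE of nat | ID of nat.
Definition isrc (c : icell) := match c with IE j => j | ID v => v end.
Definition itgt (c : icell) := match c with IE j => j.+1 | ID v => v end.
Definition ivalid (k : nat) (c : icell) :=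
  match c with IE j => (j < k)%N | ID v => (v <= k)%N end.

(* An endpoint-preserving map h : I_m -> I_k, given by the images of the m
   edges of I_m (a composable list of 1-cubes of I_k from vertex 0 to k). *)
Fixpoint is_ipath (k s : nat) (h : seq icell) : Prop :=
  match h with
  | [::] => s = k
  | c :: h' => ivalid k c /\ isrc c = s /\ is_ipath k (itgt c) h'
  end.

Definition pvtx (n : nat) (a : cube n) (g : seq (edge n)) (v : nat) : cube n :=
  match v with 0 => a | v'.+1 => nth (fun _ => a) g v' c1 end.

(* Image under g : I_k -> box^n of a 1-cube of I_k; the degenerate 1-cube at
   a vertex p of box^n is the constant map [1]^1 -> [1]^n at p. *)
Definition pimg (n : nat) (a : cube n) (g : seq (edge n)) (c : icell) : edge n :=
  match c with
  | IE j => nth (fun _ => a) g j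
  | ID v => fun _ => pvtx a g v
  end.

Definition edge_eq (n : nat) (e e' : edge n) : Prop := forall x i, e x i = e' x i.

(* Elementary relation  g ~ g' o h  (h endpoint-preserving). *)
Definition prel (n : nat) (a b : cube n) (g g' : seq (edge n)) : Prop :=
  is_path a b g /\ is_path a b g' /\
  exists h : seq icell, is_ipath (size g') 0 h /\
    size h = size g /\
    forall i, (i < size g)%N ->
      edge_eq (nth (fun _ => a) g i) (pimg a g' (nth (ID 0) h i)).

Definition peq (n : nat) (a b : cube n) : seq (edge n) -> seq (edge n) -> Prop :=
  clos_refl_sym_trans _ (@prel n a b).

Definition Pcls (n : nat) (a b : cube n) :=
  {A : seq (edge n) -> Prop |
     exists g, is_path a b g /\ forall g', A g' <-> peq a b g g'}.

(* The edges of I_2 -> box^2 for s (through {2}) and t (through {1}). *)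
Definition s_e1 : cube 1 -> cube 2 := face (ord0 : 'I_2) false.
Definition s_e2 : cube 1 -> cube 2 := face (ord_max : 'I_2) true.
Definition t_e1 : cube 1 -> cube 2 := face (ord_max : 'I_2) false.
Definition t_e2 : cube 1 -> cube 2 := face (ord0 : 'I_2) true.

(* One step [F o s_{k,m}] ~> [F o t_{k,m}], where F : II_{k,m} -> box^n is
   given by a path p (k edges) a -> q(empty), a 2-cube q, and a path
   r : q({1,2}) -> b. *)
Definition pstep (n : nat) (a b : cube n) (A B : Pcls a b) : Prop :=
  exists (p : seq (edge n)) (q : cube 2 -> cube n) (r : seq (edge n)),
    cmap q /\ is_path a (q ff2) p /\ is_path (q tt2) b r /\
    proj1_sig A (p ++ [:: (fun x => q (s_e1 x)); (fun x => q (s_e2 x))] ++ r) /\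
    proj1_sig B (p ++ [:: (fun x => q (t_e1 x)); (fun x => q (t_e2 x))] ++ r).

Definition ple (n : nat) (a b : cube n) : Pcls a b -> Pcls a b -> Prop :=
  clos_refl_trans _ (@pstep n a b).

(* C^box(box^n)(a,b) = N(C^box_path(box^n)(a,b)) (value of the left Kan
   extension along Yoneda at the representable box^n). *)
Definition Cbox_hom (n : nat) (a b : cube n) : sSet := nerve (@ple n a b).

Definition vtx_alpha (n : nat) : cube n := fun _ => false.
Definition vtx_omega (n : nat) : cube n := fun _ => true.
Arguments vtx_alpha n : clear implicits.
Arguments vtx_omega n : clear implicits.

(* Main.v *)
Require Import Defs.
From Stdlib Require Import Relation_Operators ProofIrrelevance FunctionalExtensionality PropExtensionality.
From mathcomp Require Import all_boot zify.
Set Implicit Arguments.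
Unset Strict Implicit.
Unset Printing Implicit Defensive.

Section Top.
Variables (P : Type) (le : P -> P -> Prop) (T : P).
Hypothesis le_refl : forall x, le x x.
Hypothesis le_top : forall x, le x T.

Definition lift_top k (x : nerve_sx le k) (u : mono k 1) : nerve_sx le k.
Proof.
exists (fun i => if val (proj1_sig u i) == 0 then proj1_sig x i else T).
move=> i j hij.
have hu := proj2_sig u i j hij.
case: eqP => h1; case: eqP => h2.
- by apply: (proj2_sig x).
- by apply: le_top.
- by move: hu; rewrite h2 leqn0 => /eqP.
- by apply: le_refl.
Defined.

Definition Tsimp k : nerve_sx le k.
Proof. exists (fun _ => T). by move=> *; apply: le_refl. Defined.

Definition pre_top K (F : smap (nerve le) K) : smap Delta0 K.
Proof.
    exists (fun k _ => proj1_sig F k (Tsimp k)).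
    move=> k l f x /=; rewrite -(proj2_sig F).
    congr (proj1_sig F k _); exact: sig_eq_irr.
Defined.

Lemma wc_top : weakly_contractible (nerve le).
Proof.
move=> K _; split.
- move=> F.
  exists (proj1_sig F 0 (Tsimp 0)).
  apply: rst_step.
  exists (fun k x u => proj1_sig F k (lift_top x u)); split; [|split].
  + move=> k l f x u.
    rewrite -(proj2_sig F).
    congr (proj1_sig F k _); exact: sig_eq_irr.
  + move=> k x; congr (proj1_sig F k _); exact: sig_eq_irr.
  + move=> k x /=. rewrite -(proj2_sig F).
    congr (proj1_sig F k _); exact: sig_eq_irr.
- move=> v w.
  pose pre := @pre_top K.
  have hpre : forall F G, htpy F G -> htpy (pre F) (pre G).
    move=> F G [H [H1 [H2 H3]]].
    exists (fun k _ u => H k (Tsimp k) u); split; [|split].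
    + move=> k l f x u /=. rewrite -H1.
      congr (H k _ _); exact: sig_eq_irr.
    + by move=> k x; rewrite H2.
    + by move=> k x; rewrite H3.
  have hc : forall u, pre (const_map (nerve le) K u) = const_map Delta0 K u.
    by move=> u; apply: sig_eq_irr.
  move=> h; rewrite -hc -(hc w).
  elim: h => {v w}.
  + by move=> x y hxy; apply: rst_step; apply: hpre.
  + by move=> x; apply: rst_refl.
  + by move=> x y _ IH; apply: rst_sym.
  + by move=> x y z _ IH1 _ IH2; apply: rst_trans IH2.
Qed.
End Top.

Definition upd n (u : cube n) (j : 'I_n) : cube n := fun k => (k == j) || u k.
Definition raise n (u : cube n) (o : option 'I_n) : cube n :=
  if o is Some j then upd u j else u.

Definition Rinv m n (f : cube m -> cube n) :=
  forall x i, exists o, f (upd x i) = raise (f x) o.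

Lemma cubeE n (u v : cube n) : (forall i, u i = v i) -> u = v.
Proof. exact: functional_extensionality. Qed.

Lemma Rinv_face n i e : Rinv (@face n i e).
Proof.
move=> x k; exists (Some (lift i k)); apply: cubeE => j /=.
rewrite /face /upd; case: unliftP => [j'|] ->.
- by rewrite (inj_eq (@lift_inj _ i)).
- by rewrite (negbTE (neq_lift _ _)).
Qed.

Lemma Rinv_degen n i : Rinv (@degen n i).
Proof.
move=> x k; case: (unliftP i k) => [k'|] ->.
- exists (Some k'); apply: cubeE => j; rewrite /degen /upd /=.
  by rewrite (inj_eq (@lift_inj _ i)).
- exists None; apply: cubeE => j; rewrite /degen /upd /=.
  by rewrite eq_sym (negbTE (neq_lift _ _)).
Qed.

Lemma Rinv_conn n i : Rinv (@conn n i).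
Proof.
move=> x k.
have hk : (if k <= i then val k else (val k).-1) < n.+1.
  case: ifP => h; first by apply: leq_ltn_trans h (ltn_ord i).
  by case: k h => [[|k] /=]; rewrite ?ltnS.
exists (Some (Ordinal hk)); apply: cubeE => j; rewrite /conn /upd /=.
have e1 : forall a : nat, a < n.+2 -> ((inord a : 'I_n.+2) == k) = (a == k).
  by move=> a ha; rewrite -(inj_eq val_inj) /= inordK.
have hj := ltn_ord j.
rewrite !e1 //; last by apply: leqW.
rewrite /upd -(inj_eq val_inj) /=.
case: k hk e1 => k kn /= hk _.
move: (x (inord j)) (x (inord j.+1)) => b1 b2.
have hi := ltn_ord i.
repeat match goal with
| |- context [?a < ?b] => case: (boolP (a < b)) => ?
| |- context [?a <= ?b] => case: (boolP (a <= b)) => ?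
| |- context [?a == ?b] => case: (boolP (a == b)) => ?
end; rewrite ?orbT ?orFb ?orbF //=; lia.
Qed.

Lemma Rinv_cmap m n f : @cmap m n f -> Rinv f.
Proof.
elim=> {m n f}.
- by move=> n x i; exists (Some i).
- exact: Rinv_face.
- exact: Rinv_degen.
- exact: Rinv_conn.
- move=> l m n f g _ Hf _ Hg x i.
  case: (Hf x i) => [[j|]] /= ->.
  + exact: Hg.
  + by exists None.
- move=> m n f g _ Hf e.
  have -> : g = f by apply: functional_extensionality => x; apply: cubeE => j; rewrite e.
  exact: Hf.
Qed.

Definition flipE n (u : cube n) (j : 'I_n) : edge n :=
  fun x k => if k == j then x ord0 else u k.
Definition sq n (u : cube n) (i j : 'I_n) : cube 2 -> cube n :=
  fun y k => if k == i then y ord0 else if k == j then y ord_max else u k.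

Lemma cmap_flip n (u : cube n) j : cmap (flipE u j).
Proof.
elim: n u j => [|n IH] u j; first by case: j.
case: n IH u j => [|n] IH u j.
- apply: (cmap_ext (cmap_id 1)) => x k.
  by rewrite /flipE !ord1.
- pose p : 'I_n.+2 := if j == ord0 then ord_max else ord0.
  have hp : p != j.
    rewrite /p; case: (boolP (j == ord0)) => h.
    - by rewrite (eqP h) -(inj_eq val_inj).
    - by rewrite eq_sym.
  case: (unlift_some hp) => j' hj' _.
  apply: (cmap_ext (cmap_comp (IH (fun k => u (lift p k)) j') (cmap_face p (u p)))).
  move=> x k; rewrite /face /flipE.
  case: unliftP => [k'|] ->.
  + by rewrite hj' (inj_eq (@lift_inj _ p)).
  + by rewrite (negbTE hp).
Qed.

Lemma cmap_sq n (u : cube n) (i j : 'I_n) : i < j -> cmap (sq u i j).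
Proof.
elim: n u i j => [|n IH] u i j hij; first by case: i hij.
have [hn|hn] := leqP n 1.
- case: n hn IH u i j hij => [|[|n]] // _ IH u i j hij.
  + by case: i j hij => [[|i] hi] [[|j] hj].
  + apply: (cmap_ext (cmap_id 2)) => x k.
    rewrite /sq.
    case: i j hij => [[|[|i]] hi] // [[|[|j]] hj] //= _.
    case: k => [[|[|k]] hk] //=.
    * by congr (x _); apply: val_inj.
    * by congr (x _); apply: val_inj.
- have hq : (if i == 0 :> nat then (if j == 1 :> nat then 2 else 1) else 0) < n.+1.
    by case: ifP => _; [case: ifP => _|]; lia.
  pose p : 'I_n.+1 := Ordinal hq.
  have hpi : p != i by apply/eqP => /(f_equal val) /=; case: ifP; [case: ifP|]; lia.
  have hpj : p != j by apply/eqP => /(f_equal val) /=; case: ifP; [case: ifP|]; lia.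
  case: n hn IH u i j hij hq p hpi hpj => [//|n] hn IH u i j hij hq p hpi hpj.
  case: (unlift_some hpi) => i' hi' _.
  case: (unlift_some hpj) => j' hj' _.
  have hij' : i' < j'.
    rewrite ltnNge; apply/negP => h.
    have := lift_homo p h; rewrite -hi' -hj'; lia.
  apply: (cmap_ext (cmap_comp (IH (fun k => u (lift p k)) i' j' hij') (cmap_face p (u p)))).
  move=> x k; rewrite /face /sq.
  case: unliftP => [k'|] ->.
  + by rewrite hi' hj' !(inj_eq (@lift_inj _ p)).
  + by rewrite (negbTE hpi) (negbTE hpj).
Qed.

Lemma eqptE n (u v : cube n) : eqpt u v -> u = v.
Proof. exact: cubeE. Qed.

Lemma is_path_cat n (a b : cube n) p r :
  is_path a b (p ++ r) <-> exists c, is_path a c p /\ is_path c b r.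
Proof.
elim: p a => [|e p IH] a /=.
- split; first by move=> h; exists a.
  by case=> c [/eqptE -> h].
- split.
  + case=> ce [e0 /IH [c [h1 h2]]]; by exists c.
  + case=> c [[ce [e0 h1]] h2]; split=> //; split=> //; apply/IH; by exists c.
Qed.

Lemma cube1_cases (x : cube 1) : x = c0 \/ x = c1.
Proof.
case h: (x ord0); [right|left]; apply: cubeE => i; by rewrite ord1 h.
Qed.

Lemma c1_upd : c1 = upd c0 ord0.
Proof. by apply: cubeE => i; rewrite ord1. Qed.

Fixpoint build n (u : cube n) (s : seq 'I_n) : seq (edge n) :=
  if s is j :: s' then flipE u j :: build (upd u j) s' else [::].

Lemma build_cat n (u : cube n) p r :
  build u (p ++ r) = build u p ++ build (foldl (@upd n) u p) r.
Proof. by elim: p u => [|j p IH] u //=; rewrite IH. Qed.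

Lemma foldl_upd n (u : cube n) p k : foldl (@upd n) u p k = u k || (k \in p).
Proof.
elim: p u => [|j p IH] u /=; first by rewrite orbF.
by rewrite IH /upd inE; case: (k == j); case: (u k).
Qed.

Lemma flipE_c0 n (u : cube n) j : u j = false -> flipE u j c0 = u.
Proof. move=> h; apply: cubeE => k; rewrite /flipE; case: eqP => // ->; by rewrite h. Qed.

Lemma flipE_c1 n (u : cube n) j : flipE u j c1 = upd u j.
Proof. apply: cubeE => k; by rewrite /flipE /upd; case: eqP. Qed.

Lemma is_path_build_pre n (u : cube n) p :
  uniq p -> (forall k, k \in p -> u k = false) ->
  is_path u (foldl (@upd n) u p) (build u p).
Proof.
elim: p u => [|j p IH] u /=; first by move=> *; move=> k.
case/andP=> hj hu hf; split; first exact: cmap_flip.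
rewrite flipE_c0 ?hf ?mem_head //; split; first by move=> k.
rewrite flipE_c1; apply: IH => // k hk.
rewrite /upd hf; last by rewrite inE hk orbT.
rewrite orbF; apply/negP => /eqP e; move: hj; by rewrite -e hk.
Qed.

Definition valid n (u : cube n) (s : seq 'I_n) :=
  uniq s /\ (forall k, k \in s -> u k = false) /\ (forall k, u k || (k \in s)).

Lemma is_path_build n (u : cube n) s :
  valid u s -> is_path u (vtx_omega n) (build u s).
Proof.
case=> h1 [h2 h3].
have -> : vtx_omega n = foldl (@upd n) u s by apply: cubeE => k; rewrite foldl_upd h3.
exact: is_path_build_pre.
Qed.

Lemma pvtx_cons n (a : cube n) e g v : v <= size g ->
  pvtx a (e :: g) v.+1 = pvtx (e c1) g v.
Proof.
case: v => [|v] //= hv.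
by rewrite (set_nth_default (fun=> e c1)).



Qed.

Lemma pvtx_path n (a c : cube n) p r : is_path a c p ->
  pvtx a (p ++ r) (size p) = c.
Proof.
elim: p a => [|e p IH] a /=; first by move/eqptE.
case=> _ [_ h]; change (pvtx a (e :: p ++ r) (size p).+1 = c).
rewrite pvtx_cons; last by rewrite size_cat leq_addr.
exact: IH.
Qed.

Lemma is_ipath_iota K s m h : s + m <= K -> is_ipath K (s + m) h ->
  is_ipath K s (map IE (iota s m) ++ h).
Proof.
elim: m s => [|m IH] s; first by rewrite addn0.
move=> hK hp /=; split; first by lia.
split=> //; apply: IH; first by lia.
by rewrite addSnnS.
Qed.

Lemma prel_deg n (a b : cube n) p e r :
  is_path a b (p ++ e :: r) -> (forall x, e x = e c0) ->
  prel a b (p ++ e :: r) (p ++ r).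
Proof.
move=> hp he.
have [c [hpc [ce [e0 hr]]]] := (is_path_cat a b p (e :: r)).1 hp.
have e0' := eqptE e0.
rewrite he e0' in hr.
split=> //; split; first by apply/is_path_cat; exists c.
exists (map IE (iota 0 (size p)) ++ ID (size p) :: map IE (iota (size p) (size r))).
split.
- rewrite size_cat; apply: (is_ipath_iota (s := 0)); first by lia.
  rewrite add0n /=; split; first by lia.
  split=> //; rewrite -[map _ _]cats0; apply: is_ipath_iota => //.
split; first by rewrite !size_cat /= !size_map !size_iota.
move=> i hi x k.
rewrite !size_cat /= in hi.
have [hip|hip] := ltnP i (size p).
- rewrite nth_cat size_map size_iota hip (nth_map 0) ?size_iota // nth_iota //=.
  by rewrite nth_cat hip nth_cat hip.
- rewrite nth_cat size_map size_iota ltnNge hip /=.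
  case: (posnP (i - size p)) => h0.
  + have -> : i = size p by lia.
    rewrite subnn /= nth_cat ltnn subnn /= he e0'.
    by rewrite (pvtx_path r hpc).
  + have -> : i - size p = (i - size p).-1.+1 by lia.
    rewrite /= (nth_map 0) ?size_iota; last by lia.
    rewrite nth_iota; last by lia.
    rewrite /= nth_cat ltnNge hip /= nth_cat.
    have -> : (size p + (i - size p).-1 < size p) = false by lia.
    have -> : i - size p = (i - size p).-1.+1 by lia.
    by rewrite /= addKn.
Qed.

Lemma norm n (g : seq (edge n)) : forall (u : cube n) pre,
  is_path (vtx_alpha n) u pre -> is_path u (vtx_omega n) g ->
  exists s, valid u s /\
    peq (vtx_alpha n) (vtx_omega n) (pre ++ g) (pre ++ build u s).
Proof.
elim: g => [|e g IH] u pre hpre /=.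
- move=> h; exists [::]; split; last exact: rst_refl.
  split=> //; split=> // k; by rewrite orbF (eqptE h).
- case=> ce [/eqptE e0 hg].
  have [o ho] := Rinv_cmap ce c0 ord0.
  rewrite -c1_upd e0 in ho.
  have deg : e c1 = u -> exists s, valid u s /\
    peq (vtx_alpha n) (vtx_omega n) (pre ++ e :: g) (pre ++ build u s).
    move=> h1; rewrite h1 in hg.
    have [s [hs hpq]] := IH u pre hpre hg.
    exists s; split=> //.
    apply: rst_trans hpq; apply: rst_step; apply: prel_deg.
    + apply/is_path_cat; exists u; split=> //; split=> //; split; first by rewrite e0.
      by rewrite h1.
    + by move=> x; case: (cube1_cases x) => ->; rewrite ?h1 ?e0.
  case: o ho => [j|] ho; last exact: deg.
  case hj: (u j).
  + apply: deg; rewrite ho; apply: cubeE => k; rewrite /= /upd; case: (boolP (k == j)) => hk /=; last by []; by rewrite (eqP hk) hj.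
  + have he : e = flipE u j.
      apply: functional_extensionality => x; case: (cube1_cases x) => ->.
      * by rewrite flipE_c0.
      * by rewrite flipE_c1.
    have hpre' : is_path (vtx_alpha n) (upd u j) (pre ++ [:: e]).
      apply/is_path_cat; exists u; split=> //; split=> //; split; first by rewrite e0.
      by rewrite ho.
    rewrite ho in hg.
    have [s [[hs1 [hs2 hs3]] hpq]] := IH (upd u j) (pre ++ [:: e]) hpre' hg.
    exists (j :: s); split.
    * have hjs : j \notin s.
        apply/negP => hin; move: (hs2 j hin); by rewrite /upd eqxx.
      split; first by rewrite /= hjs.
      split.
      - move=> k; rewrite inE; case/orP => [/eqP -> //|hk].
        by move: (hs2 k hk); rewrite /upd; case: (u k); rewrite ?orbT.
      - move=> k; move: (hs3 k); rewrite /upd inE; by case: (k == j); case: (u k).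
    * by rewrite -!catA /= he in hpq *.
Qed.

Ltac face_tac := rewrite /s_e1 /s_e2 /t_e1 /t_e2 /face;
  case: unliftP => [[[|?] ?]|] /(f_equal val)/eqP //= _;
  try (congr (_ _); exact: val_inj).

Lemma se1_0 (x : cube 1) : s_e1 x ord0 = false. Proof. face_tac. Qed.
Lemma se1_1 (x : cube 1) : s_e1 x ord_max = x ord0. Proof. face_tac. Qed.
Lemma se2_0 (x : cube 1) : s_e2 x ord0 = x ord0. Proof. face_tac. Qed.
Lemma se2_1 (x : cube 1) : s_e2 x ord_max = true. Proof. face_tac. Qed.
Lemma te1_0 (x : cube 1) : t_e1 x ord0 = x ord0. Proof. face_tac. Qed.
Lemma te1_1 (x : cube 1) : t_e1 x ord_max = false. Proof. face_tac. Qed.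
Lemma te2_0 (x : cube 1) : t_e2 x ord0 = true. Proof. face_tac. Qed.
Lemma te2_1 (x : cube 1) : t_e2 x ord_max = x ord0. Proof. face_tac. Qed.

Section Main.
Variable n : nat.
Notation al := (vtx_alpha n).
Notation om := (vtx_omega n).
Notation PC := (Pcls al om).

Definition cls (g : seq (edge n)) (H : is_path al om g) : PC :=
  exist _ (peq al om g) (ex_intro _ g (conj H (fun g' => conj id id))).

Lemma cls_eq (A B : PC) g : proj1_sig A g -> proj1_sig B g -> A = B.
Proof.
case: A => PA [gA [hA eA]]; case: B => PB [gB [hB eB]] /= ha hb.
apply: sig_eq_irr => /=; apply: functional_extensionality => g'.
apply: propositional_extensionality.
move/eA: ha => ha; move/eB: hb => hb.
split.
- move/eA => h; apply/eB; apply: rst_trans hb _; apply: rst_trans _ h; exact: rst_sym.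
- move/eB => h; apply/eA; apply: rst_trans ha _; apply: rst_trans _ h; exact: rst_sym.
Qed.

Definition sw (s t : seq 'I_n) := exists p r (i j : 'I_n),
  i < j /\ s = p ++ j :: i :: r /\ t = p ++ i :: j :: r.

Lemma swap_step s t : sw s t -> valid al s ->
  forall A B : PC, proj1_sig A (build al s) -> proj1_sig B (build al t) -> pstep A B.
Proof.
case=> p [r [i [j [hij [-> ->]]]]] [hu [_ hc]] A B hA hB.
move: hu; rewrite cat_uniq => /and3P [hup hnh hur].
have nip : forall k, k \in j :: i :: r -> k \notin p.
  move=> k hk; apply/negP => kp; move/negP: hnh; apply; apply/hasP; by exists k.
move: hur => /= /andP [hj /andP [hi hr]].
rewrite inE negb_or in hj; case/andP: hj => hji hjr.
set w := foldl (@upd n) al p.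
have hw : forall k, k \in j :: i :: r -> w k = false.
  by move=> k hk; rewrite /w foldl_upd (negbTE (nip k hk)).
have wi : w i = false by apply: hw; rewrite !inE eqxx orbT.
have wj : w j = false by apply: hw; rewrite !inE eqxx.
have nij : (i == j) = false by apply/negP => /eqP e; move: hij; rewrite e ltnn.
exists (build al p), (sq w i j), (build (upd (upd w i) j) r).
split; first exact: cmap_sq.
split.
  have -> : sq w i j ff2 = w.
    apply: cubeE => k; rewrite /sq; case: (boolP (k == i)) => [/eqP -> //|_].
    by case: (boolP (k == j)) => [/eqP -> //|_].
  exact: is_path_build_pre.
have eq2 : sq w i j tt2 = upd (upd w i) j.
  apply: cubeE => k; rewrite /sq /upd; case: (k == i); case: (k == j); by rewrite ?orbT.
split.
  rewrite eq2; apply: is_path_build; split=> //; split.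
  - move=> k hk; rewrite /upd hw ?inE ?hk ?orbT //.
    have -> : (k == j) = false by apply/negP => /eqP e; move: hjr; rewrite -e hk.
    have -> : (k == i) = false by apply/negP => /eqP e; move: hi; rewrite -e hk.
    done.
  - move=> k; move: (hc k); rewrite /upd /w foldl_upd mem_cat !inE.
    by case: (k == i); case: (k == j); case: (k \in r); case: (k \in p); rewrite ?orbT.
have Eu : upd (upd w j) i = upd (upd w i) j.
  by apply: cubeE => k; rewrite /upd; case: (k == i); case: (k == j).
split.
- move: hA; rewrite build_cat /= -/w Eu.
  have -> : flipE w j = (fun x => sq w i j (s_e1 x)).
    apply: functional_extensionality => x; apply: cubeE => k.
    rewrite /flipE /sq se1_0 se1_1; case: (boolP (k == i)) => [/eqP ->|//].
    by rewrite nij wi.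
  have -> : flipE (upd w j) i = (fun x => sq w i j (s_e2 x)).
    apply: functional_extensionality => x; apply: cubeE => k.
    rewrite /flipE /sq se2_0 se2_1 /upd; by case: (k == i); case: (k == j).

  exact: id.
- move: hB; rewrite build_cat /= -/w.
  have -> : flipE w i = (fun x => sq w i j (t_e1 x)).
    apply: functional_extensionality => x; apply: cubeE => k.
    rewrite /flipE /sq te1_0 te1_1; case: (k == i) => //.
    by case: (boolP (k == j)) => [/eqP ->|].
  have -> : flipE (upd w i) j = (fun x => sq w i j (t_e2 x)).
    apply: functional_extensionality => x; apply: cubeE => k.
    rewrite /flipE /sq te2_0 te2_1 /upd; case: (boolP (k == i)) => [/eqP ->|_].
    + by rewrite nij.
    + by case: (k == j).
  exact: id.
Qed.
End Main.

Section Sort.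
Variable n : nat.
Definition ltO (a b : 'I_n) := val a < val b.
Notation RT := (clos_refl_trans _ (@sw n)).

Fixpoint ins (x : 'I_n) (t : seq 'I_n) :=
  if t is y :: t' then (if ltO y x then y :: ins x t' else x :: t) else [:: x].
Fixpoint isort (s : seq 'I_n) := if s is x :: s' then ins x (isort s') else [::].

Lemma rt_prefix y t t' : RT t t' -> RT (y :: t) (y :: t').
Proof.
elim=> {t t'}.
- move=> t t' [p [r [i [j [h [-> ->]]]]]]; apply: rt_step.
  by exists (y :: p), r, i, j.
- by move=> *; apply: rt_refl.
- by move=> x z w _ h1 _ h2; apply: rt_trans h2.
Qed.

Lemma rt_ins x t : RT (x :: t) (ins x t).
Proof.
elim: t => [|y t IH] /=; first exact: rt_refl.
case: ifP => h; last exact: rt_refl.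
apply: rt_trans (rt_prefix y IH).
apply: rt_step; by exists [::], t, y, x.
Qed.

Lemma rt_isort s : RT s (isort s).
Proof.
elim: s => [|x s IH] /=; first exact: rt_refl.
apply: rt_trans (rt_ins _ _); exact: rt_prefix.
Qed.

Lemma perm_ins x t : perm_eq (x :: t) (ins x t).
Proof.
elim: t => [|y t IH] //=; case: ifP => _ //.
by rewrite -(perm_cons y) in IH; apply: perm_trans IH; rewrite (perm_catCA [:: x] [:: y]).
Qed.

Lemma perm_isort s : perm_eq s (isort s).
Proof.
elim: s => [|x s IH] //=; apply: perm_trans (perm_ins _ _); by rewrite perm_cons.
Qed.

Lemma path_ins z x t : x \notin t -> path ltO z t -> ltO z x -> path ltO z (ins x t).
Proof.
elim: t z => [|y t IH] z /=; first by move=> _ _ ->.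
rewrite inE negb_or => /andP [hxy hxt] /andP [hzy hp] hzx.
case: ifP => h /=.
- by rewrite hzy; apply: IH.
- rewrite hzx hp andbT /ltO; move: h hxy; rewrite /ltO -(inj_eq val_inj) /=; lia.
Qed.

Lemma sorted_ins x t : x \notin t -> sorted ltO t -> sorted ltO (ins x t).
Proof.
case: t => [|y t] //= hx hs; case: ifP => h /=.
- apply: path_ins => //; by move: hx; rewrite inE negb_or => /andP [].
- rewrite hs andbT /ltO; move: h hx; rewrite inE negb_or /ltO -(inj_eq val_inj) /=; lia.
Qed.

Lemma sorted_isort s : uniq s -> sorted ltO (isort s).
Proof.
elim: s => [|x s IH] //= /andP [hx hs]; apply: sorted_ins; last exact: IH.
by rewrite -(perm_mem (perm_isort s)).
Qed.

Lemma rt_perm s t : RT s t -> perm_eq s t.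
Proof.
elim=> {s t}.
- move=> s t [p [r [i [j [h [-> ->]]]]]].
  by rewrite perm_cat2l (perm_catCA [:: j] [:: i]).
- by move=> *.
- by move=> x y z _ h1 _ h2; apply: perm_trans h2.
Qed.

Lemma valid_alE s : valid (vtx_alpha n) s <-> uniq s /\ forall k, k \in s.
Proof. by split; [case=> h1 [_ h3]|case=> h1 h3; split=> //]. Qed.

Lemma valid_perm s t : perm_eq s t -> valid (vtx_alpha n) s -> valid (vtx_alpha n) t.
Proof.
move=> hp /valid_alE [h1 h2]; apply/valid_alE; split.
- by rewrite -(perm_uniq hp).
- by move=> k; rewrite -(perm_mem hp).
Qed.

Lemma ple_rt s t : RT s t -> valid (vtx_alpha n) s ->
  forall A B : Pcls (vtx_alpha n) (vtx_omega n),
  proj1_sig A (build (vtx_alpha n) s) -> proj1_sig B (build (vtx_alpha n) t) ->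
  ple A B.
Proof.
move=> h; elim: h => {s t}.
- move=> s t hst hv A B hA hB; apply: rt_step; exact: swap_step hst hv A B hA hB.
- move=> s hv A B hA hB; rewrite (cls_eq hA hB); exact: rt_refl.
- move=> x y z hxy IH1 hyz IH2 hv A C hA hC.
  have hvy := valid_perm (rt_perm hxy) hv.
  pose B := cls (is_path_build hvy).
  have hB : proj1_sig B (build (vtx_alpha n) y) by exact: rst_refl.
  apply: rt_trans (IH1 hv A B hA hB) (IH2 hvy B C hB hC).
Qed.

Lemma valid_enum : valid (vtx_alpha n) (enum 'I_n).
Proof. apply/valid_alE; split; [exact: enum_uniq | by move=> k; rewrite mem_enum]. Qed.

Lemma isort_enum s : valid (vtx_alpha n) s -> isort s = enum 'I_n.
Proof.
move=> /valid_alE [h1 h2].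
apply: (@irr_sorted_eq _ ltO).
- by move=> a b c; rewrite /ltO; apply: ltn_trans.
- by move=> a; rewrite /ltO ltnn.
- exact: sorted_isort.
- have := iota_ltn_sorted 0 n; rewrite -val_enum_ord sorted_map; exact: id.
- by move=> k; rewrite -(perm_mem (perm_isort s)) h2 mem_enum.
Qed.

Lemma top_all (A : Pcls (vtx_alpha n) (vtx_omega n)) :
  ple A (cls (is_path_build valid_enum)).
Proof.
case: A => PA [gA [hA eA]].
have [s [hs hpq]] := norm (pre := [::]) (u := vtx_alpha n) (fun k => erefl) hA.
rewrite /= in hpq.
apply: (ple_rt (rt_isort s) hs) => /=.
- by apply/eA.
- rewrite isort_enum //; exact: rst_refl.
Qed.
End Sort.

Theorem lemma3p3 (n : nat) : weakly_contractible (Cbox_hom (vtx_alpha n) (vtx_omega n)).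
Proof.
apply: (@wc_top _ _ (cls (is_path_build (valid_enum n)))).
- by move=> x; apply: rt_refl.
- exact: top_all.
Qed.
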